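(* Let $p$ be an odd prime, let $F_{X_2}$ be the fusion matrix of the simple object $X_2$ of $\operatorname{PSU}(2)_{p-2}$ (with respect to the ordered basis $X_0,X_2,\dots,X_{p-3}$), and let $T_{X_2}$ be the linear operator on $\frac{p-1}{2}\times\frac{p-1}{2}$ real matrices given by $T_{X_2}(A)=F_{X_2}^{-1}AF_{X_2}$. Then $T_{X_2}$ has no eigenvector with eigenvalue $-1$.
   Context: $\operatorname{PSU}(2)_{p-2}$ is the fusion category with simple objects $X_{2j}$, $0\le j\le\frac{p-3}{2}$, $X_0=\mathbf 1$, and fusion rules $X_{2i}\otimes X_{2j}\cong\bigoplus_m N_{2i,2j}^{2m}X_{2m}$ with $N_{2i,2j}^{2m}=1$ if $|2i-2j|\le2m\le\min\{2i+2j,2(p-2)-2i-2j\}$ and $0$ otherwise. The fusion matrix $F_{X_2}$ has $(m,i)$ entry $N_{2,2i}^{2m}$ (multiplicity of $X_{2m}$ in $X_2\otimes X_{2i}$); it is the symmetric tridiagonal matrix with $0$ in position $(1,1)$, $1$ on the rest of the diagonal, and $1$ on the sub- and super-diagonals, and it is invertible. *)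

(* Defs.v *)
From HB Require Import structures.
From mathcomp Require Import all_boot all_order all_algebra.
From mathcomp Require Import reals.
Set Implicit Arguments. Unset Strict Implicit. Unset Printing Implicit Defensive.
Import Order.TTheory GRing.Theory Num.Theory.
Local Open Scope ring_scope.

(* Fusion coefficient N_{2i,2j}^{2m} of PSU(2)_{p-2} (labels X_{2i}):
   1 iff |2i-2j| <= 2m <= min(2i+2j, 2(p-2)-2i-2j). The absolute value
   |2i-2j| <= 2m is written as the conjunction of the two truncated
   differences. *)
Definition psu2_N (p i j m : nat) : bool :=
  [&& (2 * i - 2 * j <= 2 * m)%N, (2 * j - 2 * i <= 2 * m)%N
    & (2 * m <= minn (2 * i + 2 * j) (2 * (p - 2) - 2 * i - 2 * j))%N].

Definition psu2_rank (p : nat) : nat := (p - 1)./2.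

Definition fusion_mx_X2 (R : realType) (p : nat) : 'M[R]_(psu2_rank p) :=
  \matrix_(m, i) ((psu2_N p 1 i m : nat)%:R).

Definition T_X2 (R : realType) (p : nat) (A : 'M[R]_(psu2_rank p)) :
  'M[R]_(psu2_rank p) :=
  invmx (fusion_mx_X2 R p) *m A *m fusion_mx_X2 R p.

(* Main.v *)
Require Import Defs.
From HB Require Import structures.
From mathcomp Require Import all_boot all_order all_algebra.
From mathcomp Require Import reals.
From mathcomp Require Import zify ring.
Import Order.TTheory GRing.Theory Num.Theory.
Local Open Scope ring_scope.

Module Helpers.
Set Implicit Arguments. Unset Strict Implicit. Unset Printing Implicit Defensive.


Lemma rank_eq p : odd p -> p = (psu2_rank p).*2.+1.
Proof. rewrite /psu2_rank => Ho.
have h : p = (p./2).*2.+1 by rewrite -[in LHS](odd_double_half p) Ho.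
by rewrite [in (p - 1)%N]h subn1 /= doubleK -h. Qed.

Lemma N_eq p i m : odd p -> (i < psu2_rank p)%N -> (m < psu2_rank p)%N ->
  psu2_N p 1 i m = [|| i == m.+1, i.+1 == m | (i == m) && (0 < m)%N].
Proof.
move=> Ho; have E := rank_eq Ho; move: (psu2_rank p) E => n E Hi Hm.
rewrite /psu2_N E leq_min -!muln2.
case: (boolP (i == m.+1)) => [/eqP Ei|h1] /=. subst i. apply/and4P; split; lia.
case: (boolP (i.+1 == m)) => [/eqP Ei|h2] /=. subst m; apply/and4P; split; lia.
case: (boolP ((i == m) && (0 < m)%N)) => [/andP [/eqP Ei h3]|h3] /=. subst i; apply/and4P; split; lia.
apply/negP => /and4P [a b c d]. move: h1 h2 h3. lia.
Qed.


Definition Fm (S : nzRingType) p : 'M[S]_(psu2_rank p) :=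
  \matrix_(m, i) ((psu2_N p 1 i m : nat)%:R).

Lemma sum_ind (S : nzRingType) n (f : nat -> S) k :
  \sum_(i < n) ((i == k :> nat)%:R * f i) = if (k < n)%N then f k else 0.
Proof.
rewrite -(big_ord1_eq (@GRing.add S) f) [RHS]big_mkcond /=; apply: eq_bigr => i _.
by case: (_ == _); rewrite ?mul1r ?mul0r.
Qed.

Lemma sum_row (S : nzRingType) p (f : nat -> S) (m : 'I_(psu2_rank p)) : odd p ->
  \sum_i (Fm S p m i * f i) =
  (if (m.+1 < psu2_rank p)%N then f m.+1 else 0) +
  (if (0 < m)%N then f m.-1 + f m else 0).
Proof.
move=> Ho.
under eq_bigr => i _ do rewrite mxE (N_eq Ho (ltn_ord i) (ltn_ord m)).
have H : forall i mm : nat,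
  ([|| i == mm.+1, (i.+1 == mm) | (i == mm) && (0 < mm)%N] : nat)%:R * f i
  = (i == mm.+1)%:R * f i + (0 < mm)%N%:R * ((i == mm.-1)%:R * f i)
    + (0 < mm)%N%:R * ((i == mm)%:R * f i).
  move=> i [|m'] /=; rewrite ?mul0r ?addr0.
    by case: eqP => _; rewrite //= ?andbF ?orbF ?mul0r //.
  rewrite !mul1r eqSS /=.
  case E1: (i == m'.+2); case E2: (i == m'); case E3: (i == m'.+1);
    rewrite /= ?mul0r ?mul1r ?addr0 ?add0r //; exfalso; move: E1 E2 E3; lia.
under eq_bigr => i _ do rewrite H.
rewrite !big_split /= -!big_distrr /= !sum_ind.
case: (val m) (ltn_ord m) => [|m'] /= Hm; first by rewrite !mul0r !addr0.
by rewrite Hm (ltnW Hm) !mulr1n !mul1r addrA.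
Qed.


Definition cc (S : comNzRingType) (j m : nat) : S :=
  (-1) ^+ (j + m) * ('C(j.*2.+1, j + m.+1))%:R.

Lemma binid1 a k : 'C(a.+2, k.+2) = ('C(a, k) + 2 * 'C(a, k.+1) + 'C(a, k.+2))%N.
Proof. rewrite !binS; lia. Qed.

Lemma binid0 j : 'C(j.*2.+3, j.+2) = ('C(j.*2.+1, j.+2) + 3 * 'C(j.*2.+1, j.+1))%N.
Proof.
rewrite binid1.
have -> : 'C(j.*2.+1, j) = 'C(j.*2.+1, j.+1).
  rewrite -[in RHS](bin_sub (n := j.*2.+1) (m := j.+1)); last lia.
  congr binomial; lia.
lia.
Qed.

Lemma cc_step (S : comNzRingType) p (j : nat) (m : 'I_(psu2_rank p)) : odd p ->
  (j < psu2_rank p)%N ->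
  \sum_i (Fm S p m i * cc S j i) - 3 * cc S j m = cc S j.+1 m.
Proof.
move=> Ho Hj; rewrite sum_row //.
have -> : (if (m.+1 < psu2_rank p)%N then cc S j m.+1 else 0) = cc S j m.+1.
  case: ltnP => // h; have e : m.+1 = psu2_rank p by have := ltn_ord m; lia.
  by rewrite /cc e bin_small ?mulr0 //; lia.
rewrite /cc; case: (val m) => [|m'] /=.
  rewrite !addn0 !addn1 addn2 doubleS binid0 !exprS natrD natrM; ring.
rewrite !(addnS, addSn) doubleS binid1 !exprS natrD natrD natrM; ring.
Qed.


Section Gen.
Variables (S : comNzRingType) (p : nat).
Hypothesis Ho : odd p.
Local Notation n := (psu2_rank p).
Local Notation F := (Fm S p).
Definition Gm : 'M[S]_n := F - 3%:M.
Definition ev (k : nat) : 'cV[S]_n := \col_m ((m == k :> nat)%:R).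
Definition wv (j : nat) : 'cV[S]_n := \col_m (cc S j m).

Lemma iter_w j : (j <= n)%N -> iter j (mulmx Gm) (ev 0) = wv j.
Proof.
elim: j => [|j IH] Hj /=.
  apply/matrixP => m k; rewrite !mxE /cc add0n.
  case: m => [[|m'] Hm] /=; first by rewrite expr0 mul1r double0 add0n bin1.
  by rewrite bin_small ?mulr0.

rewrite IH ?(ltnW Hj) //; apply/matrixP => m k; rewrite ord1.
rewrite /Gm mulmxBl mul_scalar_mx !mxE -(cc_step S m Ho Hj).
rewrite /wv (eq_bigr (fun i => Fm S p m i * cc S j i)); first reflexivity.
by move=> i _; congr (_ * _); rewrite mxE.

Qed.

Lemma Fe0 : F *m ev 0 = ev 1.
Proof.
apply/matrixP => m k; rewrite mxE (eq_bigr (fun i => F m i * (i == 0 :> nat)%:R)); last first.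
  by move=> i _; congr (_ * _); rewrite mxE.
rewrite (sum_row (fun i : nat => (i == 0)%:R : S) m Ho) mxE.
case: m => [[|m'] Hm] /=; first by case: ifP; rewrite ?addr0.
by case: ifP => _; case: m' Hm => [|m''] //= Hm; rewrite ?add0r ?addr0.
Qed.

Lemma Fek k : (k.+1 < n)%N -> F *m ev k.+1 = ev k + ev k.+1 + ev k.+2.
Proof.
move=> Hk; apply/matrixP => m l; rewrite mxE (eq_bigr (fun i => F m i * (i == k.+1 :> nat)%:R)); last first.
  by move=> i _; congr (_ * _); rewrite mxE.
rewrite (sum_row (fun i : nat => (i == k.+1)%:R : S) m Ho) !mxE.
have Hm := ltn_ord m.
case: m Hm => [[|m'] Hm0] /= Hm.
  case: k Hk => [|k'] Hk; first by rewrite Hk !addr0.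
  by case: ifP => _ /=; rewrite ?addr0.
case E1: (m'.+2 < n)%N; case E2: (m'.+2 == k.+1); case E3 : (m' == k.+1);
  case E4: (m'.+1 == k.+1); case E5 : (m'.+1 == k); case E6: (m'.+1 == k.+2);
  rewrite /= ?add0r ?addr0 //; exfalso; move: E1 E2 E3 E4 E5 E6 Hk Hm; lia.
Qed.

Definition Gn := iter n (mulmx Gm) 1%:M.

Lemma iterG k q (X : 'M[S]_(n, q)) : iter k (mulmx Gm) X = iter k (mulmx Gm) 1%:M *m X.
Proof. elim: k => [|k IH] /=; first by rewrite mul1mx. by rewrite IH mulmxA. Qed.

Lemma GF : Gm *m F = F *m Gm.
Proof. by rewrite /Gm mulmxBl mulmxBr scalar_mxC. Qed.

Lemma GnF k : iter k (mulmx Gm) 1%:M *m F = F *m iter k (mulmx Gm) 1%:M.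
Proof.
elim: k => [|k IH] /=; first by rewrite mul1mx mulmx1.
by rewrite -mulmxA IH !mulmxA GF.
Qed.

Lemma ev_big k : (n <= k)%N -> ev k = 0.
Proof.
move=> h; apply/matrixP => m l; rewrite !mxE.
by case: eqP => // e; have := ltn_ord m; lia.
Qed.

Hypothesis wn0 : forall m : nat, (m < n)%N -> cc S n m = 0.

Lemma Gn_ev k : Gn *m ev k = 0 /\ Gn *m ev k.+1 = 0.
Proof.
have H0 : Gn *m ev 0 = 0.
  rewrite -iterG iter_w //; apply/matrixP => m l; rewrite !mxE wn0 //.
elim: k => [|k [IH1 IH2]].
  by split => //; rewrite -Fe0 mulmxA /Gn GnF -mulmxA H0 mulmx0.
split => //.
case: (ltnP k.+1 n) => h; last by rewrite ev_big ?mulmx0 //; lia.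
have -> : ev k.+2 = F *m ev k.+1 - ev k - ev k.+1.
  by rewrite Fek //; apply/matrixP => a b; rewrite !mxE /=; ring.
by rewrite !mulmxBr mulmxA /Gn GnF -mulmxA -/Gn IH2 IH1 mulmx0 !subr0.
Qed.

Lemma Gn0 : Gn = 0.
Proof.
apply/matrixP => a b.
have := congr1 (fun M : 'cV[S]_n => M a 0) (proj1 (Gn_ev b)).
rewrite !mxE => <-.
rewrite (bigD1 b) //= big1 ?addr0; first by rewrite !mxE eqxx mulr1.
move=> i ne; rewrite mxE.
have -> : (i == b :> nat) = false by apply/negbTE.
by rewrite mulr0.
Qed.

End Gen.


Definition Km (S : comNzRingType) p : 'M[S]_(psu2_rank p * psu2_rank p) :=
  lin_mulmxr (Fm S p) + lin_mulmx (Fm S p).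

Section Fld.
Variables (K : fieldType) (p : nat).
Hypothesis Ho : odd p.
Local Notation n := (psu2_rank p).
Local Notation F := (Fm K p).
Hypothesis wn0 : forall m : nat, (m < n)%N -> cc K n m = 0.
Hypothesis c3 : (3 : K) != 0.
Hypothesis c6 : (6 : K) != 0.

Lemma inj_c (c : K) q (X : 'M[K]_(n, q)) : c != 0 -> (Gm K p + c%:M) *m X = 0 -> X = 0.
Proof.
move=> cn0 h.
have hG : Gm K p *m X = - c *: X.
  by apply/eqP; rewrite -subr_eq0 scaleNr opprK -mul_scalar_mx -mulmxDl h.
have hk : forall k, iter k (mulmx (Gm K p)) X = (- c) ^+ k *: X.
  elim=> [|k IH] /=; first by rewrite scale1r.
  by rewrite IH -scalemxAr hG scalerA exprSr.
have := hk n; rewrite iterG -/(Gn K p) (Gn0 Ho wn0) mul0mx => /esym/eqP.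
rewrite scaler_eq0 expf_eq0 oppr_eq0 (negbTE cn0) andbF /= => /eqP //.
Qed.

Lemma FG : F = Gm K p + 3%:M.
Proof. by rewrite /Gm subrK. Qed.

Lemma F_unit : F \in unitmx.
Proof.
rewrite -unitmx_tr -row_free_unit; apply: inj_row_free => v hv.
have : F *m v^T = 0 by rewrite -[F *m _]trmxK trmx_mul trmxK hv trmx0.
rewrite FG => /(inj_c c3) /eqP; rewrite -trmx0 (inj_eq trmx_inj) => /eqP //.
Qed.

Lemma aux6 (G A : 'M[K]_n) :
  A *m G + (G + 6%:M) *m A = A *m (G + 3%:M) + (G + 3%:M) *m A.
Proof.
rewrite mulmxDr !mulmxDl mul_mx_scalar !mul_scalar_mx.
have -> : (6 : K) = 3 + 3 by rewrite -natrD.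
by rewrite scalerDl !addrA (addrAC (A *m G) (3 *: A) (G *m A)).
Qed.

Lemma AF0 (A : 'M[K]_n) : A *m F + F *m A = 0 -> A = 0.
Proof.
move=> h.
set H := - (Gm K p + 6%:M).
have hA : A *m Gm K p = H *m A.
  apply/eqP; rewrite -subr_eq0 /H mulNmx opprK.
  rewrite aux6 -FG h //.
have hk : forall k, A *m iter k (mulmx (Gm K p)) 1%:M = iter k (mulmx H) A.
  elim=> [|k IH] /=; first by rewrite mulmx1.
  by rewrite mulmxA hA -mulmxA IH.
have hH : forall q (X : 'M[K]_(n, q)), H *m X = 0 -> X = 0.
  move=> q X; rewrite /H mulNmx => /eqP; rewrite oppr_eq0 => /eqP; exact: inj_c.
have peel : forall k, iter k (mulmx H) A = 0 -> A = 0.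
  elim=> [|k IH] //= h0; apply: IH; apply: hH; exact: h0.
by apply: (peel n); rewrite -hk -/(Gn K p) (Gn0 Ho wn0) mulmx0.
Qed.

Lemma K_unit : Km K p \in unitmx.
Proof.
rewrite -row_free_unit; apply: inj_row_free => v.
rewrite -(vec_mxK v); move: (vec_mx v) => A.
rewrite /Km mulmxDr !mul_vec_lin /= -linearD /= => /eqP; rewrite mxvec_eq0 => /eqP /AF0 ->.
by rewrite linear0.
Qed.

End Fld.


Lemma Fm_map (S : comNzRingType) p : map_mx intr (Fm int p) = Fm S p.
Proof. by apply/matrixP => i j; rewrite !mxE rmorph_nat. Qed.

Lemma Km_map (S : comNzRingType) p : map_mx intr (Km int p) = Km S p.
Proof.
rewrite /Km map_mxD /lin_mulmxr /lin_mulmx.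
rewrite (map_lin_mx (gf := mulmxr (Fm S p))); last by move=> A; rewrite /= map_mxM Fm_map.
rewrite (map_lin_mx (gf := mulmx (Fm S p))) //.
by move=> A; rewrite /= map_mxM Fm_map.
Qed.

Lemma wn0_Fp p (hp : prime p) (ho : odd p) :
  forall m : nat, (m < psu2_rank p)%N -> cc 'F_p (psu2_rank p) m = 0.
Proof.
move=> m hm; rewrite /cc.
have E := rank_eq ho.
rewrite -E (bin_lt_pcharf_0 (pchar_Fp hp)) ?mulr0 //.
move: (psu2_rank p) E hm => n E hm; apply/andP; split; lia.
Qed.

Lemma cFp p (hp : prime p) k : (0 < k < p)%N -> (k%:R : 'F_p) != 0.
Proof.
move=> /andP [h1 h2]; rewrite -(dvdn_pcharf (pchar_Fp hp)).
apply/negP => /dvdn_leq; lia.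
Qed.

Lemma unit_transport k (M : forall S : comNzRingType, 'M[S]_k)
  (hM : forall S : comNzRingType, map_mx intr (M int) = M S) (p : nat) (hp : prime p) (R : realType) :
  M 'F_p \in unitmx -> M R \in unitmx.
Proof.
rewrite !unitmxE !unitfE -(hM 'F_p) -(hM R) !det_map_mx => h.
rewrite intr_eq0; apply: contra h => /eqP ->; by rewrite rmorph0.
Qed.

End Helpers.
Import Helpers.

Theorem mainTheorem19 (R : realType) (p : nat) (hp : prime p) (hodd : odd p) :
  ~ (exists A : 'M[R]_(psu2_rank p), A != 0 /\ @T_X2 R p A = (-1) *: A).
Proof.
move=> [A [nz hT]].
have eF : fusion_mx_X2 R p = Fm R p by [].
case: (p =P 3%N) => [e3|n3].
  subst p; move: hT; rewrite /T_X2.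
  have -> : fusion_mx_X2 R 3 = 0.
    by apply/matrixP => i j; rewrite !mxE !ord1.
  rewrite mulmx0 scaleN1r => /esym/eqP; rewrite oppr_eq0 => /eqP h.
  by rewrite h eqxx in nz.
have p5 : (5 <= p)%N.
  have p2 := prime_gt1 hp.
  have : p <> 4%N by move=> e; rewrite e in hodd.
  have : p <> 2%N by move=> e; rewrite e in hodd.
  move: n3 p2; lia.
have Ho := hodd.
have wn := wn0_Fp hp hodd.
have c3 : (3 : 'F_p) != 0 by apply: cFp; lia.
have c6 : (6 : 'F_p) != 0.
  rewrite -(dvdn_pcharf (pchar_Fp hp)); apply/negP => h.
  have h6 := dvdn_leq (isT : (0 < 6)%N) h.
  have n6 : p <> 6%N by move=> e; rewrite e in hodd.
  have e5 : p = 5%N by lia.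
  by rewrite e5 in h.
have hF : Fm R p \in unitmx.
  apply: (@unit_transport _ (fun S => Fm S p) (fun S => Fm_map S p) p hp R).
  exact: (F_unit Ho wn c3).
have hK : Km R p \in unitmx.
  apply: (@unit_transport _ (fun S => Km S p) (fun S => Km_map S p) p hp R).
  exact: (K_unit Ho wn c6).
have hAF : A *m Fm R p + Fm R p *m A = 0.
  have : A *m Fm R p = Fm R p *m (invmx (Fm R p) *m A *m Fm R p).
    by rewrite !mulmxA mulmxV // mul1mx.
  move: hT; rewrite /T_X2 eF => -> ->.
  by rewrite scaleN1r mulmxN addNr.
have : mxvec A *m Km R p = 0.
  by rewrite /Km mulmxDr !mul_vec_lin /= -linearD /= hAF linear0.
move=> /(congr1 (mulmx^~ (invmx (Km R p)))); rewrite mulmxK // mul0mx => /eqP.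
by rewrite mxvec_eq0 (negbTE nz).
Qed.
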